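(* (i) If there exists a function $m:\Gamma\to(0,\infty)$ such that $\beta_x m(x)\ge \lambda_x m(x')+\sum_{y\in N_x}\lambda_y m(y)$ for every $x\in\Gamma$, then $(Jv,v)\ge0$ for all $v\in\mathcal F(\Gamma)$. (ii) Conversely, if $(Jv,v)\ge 0$ for all $v\in\mathcal F(\Gamma)$, then there exists a function $m:\Gamma\to(0,\infty)$ such that $\beta_x m(x)= \lambda_x m(x')+\sum_{y\in N_x}\lambda_y m(y)$ for every $x\in\Gamma$.
   Context: Let $\Gamma$ be an infinite connected tree whose vertices are arranged in levels $\ell(x)\in\{0,1,2,\dots\}$: every vertex $x$ is adjacent to exactly one vertex $x'$ with $\ell(x')=\ell(x)+1$; for $\ell(x)\ge 1$ the set $N_x=\{y:\ y'=x\}$ of neighbours of $x$ on level $\ell(x)-1$ is finite and nonempty; $N_x=\emptyset$ if $\ell(x)=0$; there are no other edges. Fix $\lambda_x>0$, $\beta_x\in\mathbb R$. The Jacobi matrix $J$ acts on functions $v:\Gamma\to\mathbb C$ by $(Jv)(x)=\lambda_x v(x')+\beta_x v(x)+\sum_{y\in N_x}\lambda_y v(y)$. $\mathcal F(\Gamma)$ denotes the finitely supported functions on $\Gamma$, and $(u,v)=\sum_{x\in\Gamma}u(x)\overline{v(x)}$. *)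

(* Defs.v *)
From Stdlib Require Import Reals List.
Import ListNotations.
Open Scope R_scope.

Definition C : Type := (R * R)%type.
Definition Cre (z : C) : R := fst z.
Definition Cim (z : C) : R := snd z.
Definition C0 : C := (0, 0).
Definition Cadd (z w : C) : C := (fst z + fst w, snd z + snd w).
Definition Cmul (z w : C) : C :=
  (fst z * fst w - snd z * snd w, fst z * snd w + snd z * fst w).
Definition Cconj (z : C) : C := (fst z, - snd z).
Definition RtoC (r : R) : C := (r, 0).

Definition lsumR {V : Type} (l : list V) (g : V -> R) : R :=
  fold_right (fun y acc => g y + acc) 0 l.
Definition lsumC {V : Type} (l : list V) (g : V -> C) : C :=
  fold_right (fun y acc => Cadd (g y) acc) C0 l.

(* The Jacobi matrix: par x = x', ch x = an enumeration (without repetition) of N_x.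
   (Jv)(x) = lam x v(x') + beta x v(x) + sum_{y in N_x} lam y v(y). *)
Definition Jac {V : Type} (par : V -> V) (ch : V -> list V) (lam beta : V -> R)
  (v : V -> C) (x : V) : C :=
  Cadd (Cadd (Cmul (RtoC (lam x)) (v (par x))) (Cmul (RtoC (beta x)) (v x)))
       (lsumC (ch x) (fun y => Cmul (RtoC (lam y)) (v y))).

Definition inner {V : Type} (S : list V) (u w : V -> C) : C :=
  lsumC S (fun x => Cmul (u x) (Cconj (w x))).

(* (Jv, v) >= 0 for all finitely supported v: for any v : V -> C and any duplicate-free
   list S containing the support of v, the (finite) sum over Gamma equals the sum over S,
   and it is a nonnegative real number. *)
Definition J_nonneg {V : Type} (par : V -> V) (ch : V -> list V) (lam beta : V -> R) : Prop :=
  forall (v : V -> C) (S : list V),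
    NoDup S -> (forall x, ~ In x S -> v x = C0) ->
    Cim (inner S (Jac par ch lam beta v) v) = 0 /\
    0 <= Cre (inner S (Jac par ch lam beta v) v).

Definition level_tree {V : Type} (par : V -> V) (lev : V -> nat) (ch : V -> list V) : Prop :=
  inhabited V /\
  (forall x, lev (par x) = S (lev x)) /\
  (forall x, NoDup (ch x)) /\
  (forall x y, In y (ch x) <-> par y = x) /\
  (forall x, (1 <= lev x)%nat -> ch x <> []) /\
  (forall x, lev x = 0%nat -> ch x = []) /\
  (forall x y, exists n k : nat, Nat.iter n par x = Nat.iter k par y).

(* Main.v *)
Require Import Defs.
From Stdlib Require Import Reals List Lra Lia Psatz ClassicalEpsilon Permutation.
Import ListNotations.
Open Scope R_scope.

Definition EM (P : Prop) : {P} + {~ P} := excluded_middle_informative P.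

Lemma lsumR_nil {V} (g : V -> R) : lsumR [] g = 0.
Proof. reflexivity. Qed.
Lemma lsumR_cons {V} (a : V) l (g : V -> R) : lsumR (a :: l) g = g a + lsumR l g.
Proof. reflexivity. Qed.

Lemma lsumR_ext {V} (l : list V) f g : (forall y, In y l -> f y = g y) -> lsumR l f = lsumR l g.
Proof.
  induction l as [|a l IH]; intros H; rewrite ?lsumR_nil, ?lsumR_cons; auto.
  rewrite H by (left; auto). rewrite IH; auto. intros; apply H; right; auto.
Qed.

Lemma lsumR_plus {V} (l : list V) f g : lsumR l (fun y => f y + g y) = lsumR l f + lsumR l g.
Proof. induction l as [|a l IH]; rewrite ?lsumR_nil, ?lsumR_cons; [lra|rewrite IH; lra]. Qed.

Lemma lsumR_minus {V} (l : list V) f g : lsumR l (fun y => f y - g y) = lsumR l f - lsumR l g.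
Proof. induction l as [|a l IH]; rewrite ?lsumR_nil, ?lsumR_cons; [lra|rewrite IH; lra]. Qed.

Lemma lsumR_scal {V} (l : list V) c f : lsumR l (fun y => c * f y) = c * lsumR l f.
Proof. induction l as [|a l IH]; rewrite ?lsumR_nil, ?lsumR_cons; [lra|rewrite IH; lra]. Qed.

Lemma lsumR_le {V} (l : list V) f g : (forall y, In y l -> f y <= g y) -> lsumR l f <= lsumR l g.
Proof.
  induction l as [|a l IH]; intros H; rewrite ?lsumR_nil, ?lsumR_cons; [lra|].
  assert (f a <= g a) by (apply H; left; auto).
  assert (lsumR l f <= lsumR l g) by (apply IH; intros; apply H; right; auto). lra.
Qed.

Lemma lsumR_zero {V} (l : list V) f : (forall y, In y l -> f y = 0) -> lsumR l f = 0.
Proof.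
  intros H. rewrite (lsumR_ext l f (fun _ => 0)) by auto.
  clear H; induction l; rewrite ?lsumR_nil, ?lsumR_cons; [lra|rewrite IHl; lra].
Qed.

Lemma lsumR_perm {V} (l1 l2 : list V) f : Permutation l1 l2 -> lsumR l1 f = lsumR l2 f.
Proof.
  induction 1; rewrite ?lsumR_nil, ?lsumR_cons.
  - lra.
  - rewrite IHPermutation; lra.
  - lra.
  - rewrite IHPermutation1; auto.
Qed.

Definition nzb (x : R) : bool := if EM (x = 0) then false else true.

Lemma lsumR_filter {V} (l : list V) f : lsumR l f = lsumR (filter (fun z => nzb (f z)) l) f.
Proof.
  induction l as [|a l IH]; [reflexivity|].
  cbn [filter]. unfold nzb at 1; destruct (EM (f a = 0)) as [E|E]; rewrite lsumR_cons, IH.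
  - rewrite E; lra.
  - rewrite lsumR_cons; auto.
Qed.

Lemma lsumR_same {V} (l1 l2 : list V) f : NoDup l1 -> NoDup l2 ->
  (forall z, f z <> 0 -> (In z l1 <-> In z l2)) -> lsumR l1 f = lsumR l2 f.
Proof.
  intros N1 N2 H. rewrite (lsumR_filter l1), (lsumR_filter l2).
  apply lsumR_perm, NoDup_Permutation; try apply NoDup_filter; auto.
  intros z. rewrite !filter_In. unfold nzb. destruct (EM (f z = 0)) as [E|E].
  - split; intros [_ X]; discriminate.
  - specialize (H z E). tauto.
Qed.

Lemma lsumR_exchange {V W} (l1 : list V) (l2 : list W) h :
  lsumR l1 (fun z => lsumR l2 (fun y => h z y)) = lsumR l2 (fun y => lsumR l1 (fun z => h z y)).
Proof.
  induction l1 as [|a l IH]; rewrite ?lsumR_nil, ?lsumR_cons.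
  - symmetry; apply lsumR_zero; intros; apply lsumR_nil.
  - rewrite IH. rewrite <- lsumR_plus. apply lsumR_ext; intros; rewrite lsumR_cons; auto.
Qed.

Lemma lsumR_single {V} (l : list V) a g : NoDup l -> In a l ->
  (forall z, In z l -> z <> a -> g z = 0) -> lsumR l g = g a.
Proof.
  induction l as [|b l IH]; intros N Ha H; [destruct Ha|].
  inversion N; subst. rewrite lsumR_cons. destruct Ha as [<-|Ha].
  - rewrite lsumR_zero; [lra|]. intros y Hy; apply H; [right; auto|]. intros ->; auto.
  - rewrite IH; auto. rewrite H; [lra|left; auto|]. intros ->; auto.
    intros; apply H; auto; right; auto.
Qed.

Lemma lsumR_two {V} (l : list V) a b g : NoDup l -> In a l -> In b l -> a <> b ->
  (forall z, In z l -> z <> a -> z <> b -> g z = 0) -> lsumR l g = g a + g b.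
Proof.
  intros N Ha Hb Hab H.
  rewrite (lsumR_ext l g (fun z => (if EM (z = b) then 0 else g z) + (if EM (z = b) then g z else 0))).
  2:{ intros; destruct (EM (y = b)); lra. }
  rewrite lsumR_plus. rewrite (lsumR_single l a), (lsumR_single l b); auto.
  - destruct (EM (a = b)); try tauto. destruct (EM (b = b)); try tauto.
  - intros z _ Hz; destruct (EM (z = b)); tauto.
  - intros z Hz Hza; destruct (EM (z = b)); auto.
Qed.

Lemma reindex {V} (par : V -> V) (ch : V -> list V)
  (Hch : forall x y, In y (ch x) <-> par y = x) (HND : forall x, NoDup (ch x))
  (S : list V) (NS : NoDup S) (h : V -> V -> R)
  (Hh : forall y, h (par y) y <> 0 -> In (par y) S /\ In y S) :
  lsumR S (fun z => lsumR (ch z) (h z)) = lsumR S (fun y => h (par y) y).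
Proof.
  transitivity (lsumR S (fun z => lsumR S (fun y => if EM (par y = z) then h z y else 0))).
  { apply lsumR_ext; intros z _.
    rewrite (lsumR_ext (ch z) (h z) (fun y => if EM (par y = z) then h z y else 0)).
    2:{ intros y Hy. apply Hch in Hy. destruct (EM (par y = z)); tauto. }
    apply lsumR_same; auto. intros y Hy. destruct (EM (par y = z)) as [E|E]; [|tauto].
    subst z. split; intros _. apply Hh; auto. apply Hch; auto. }
  rewrite lsumR_exchange. apply lsumR_ext; intros y Hy.
  destruct (EM (In (par y) S)) as [P|P].
  - rewrite (lsumR_single S (par y)); auto.
    + destruct (EM (par y = par y)); tauto.
    + intros z _ Hz. destruct (EM (par y = z)); auto. congruence.
  - rewrite lsumR_zero.
    + destruct (Req_dec (h (par y) y) 0) as [E|E]; [lra|]. exfalso; apply P, (Hh y E).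
    + intros z Hz. destruct (EM (par y = z)); auto. subst; tauto.
Qed.

Lemma reindex_le {V} (par : V -> V) (ch : V -> list V)
  (Hch : forall x y, In y (ch x) <-> par y = x) (HND : forall x, NoDup (ch x))
  (S : list V) (NS : NoDup S) (h : V -> V -> R) (Hpos : forall z y, 0 <= h z y)
  (Hh : forall y, h (par y) y <> 0 -> In (par y) S) :
  lsumR S (fun y => h (par y) y) <= lsumR S (fun z => lsumR (ch z) (h z)).
Proof.
  set (h' := fun z y => if EM (In y S) then h z y else 0).
  rewrite (lsumR_ext S (fun y => h (par y) y) (fun y => h' (par y) y)).
  2:{ intros y Hy; unfold h'; destruct (EM (In y S)); tauto. }
  rewrite <- (reindex par ch Hch HND S NS h').
  - apply lsumR_le; intros z _. apply lsumR_le; intros y _. unfold h'.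
    destruct (EM (In y S)); auto; lra.
  - intros y. unfold h'. destruct (EM (In y S)) as [I|I]; [|tauto]. auto.
Qed.
Definition JR {V} (par : V -> V) (ch : V -> list V) (lam beta : V -> R) (g : V -> R) (z : V) : R :=
  lam z * g (par z) + beta z * g z + lsumR (ch z) (fun y => lam y * g y).

Lemma Cre_lsumC {V} (l : list V) h : Cre (lsumC l h) = lsumR l (fun y => Cre (h y)).
Proof. induction l as [|a l IH]; [reflexivity|]. simpl. unfold Cre in *. simpl. rewrite IH. reflexivity. Qed.
Lemma Cim_lsumC {V} (l : list V) h : Cim (lsumC l h) = lsumR l (fun y => Cim (h y)).
Proof. induction l as [|a l IH]; [reflexivity|]. simpl. unfold Cim in *. simpl. rewrite IH. reflexivity. Qed.

Lemma Cre_Jac {V} par ch lam beta (v : V -> Defs.C) x :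
  Cre (Jac par ch lam beta v x) = JR par ch lam beta (fun z => Cre (v z)) x.
Proof.
  unfold Jac, JR. change (Cre (Cadd ?a ?b)) with (Cre a + Cre b).
  rewrite Cre_lsumC. unfold Cre, Cmul, Cadd, RtoC; simpl.
  rewrite (lsumR_ext _ _ (fun y => lam y * fst (v y))).
  2:{ intros; simpl; ring. } ring.
Qed.
Lemma Cim_Jac {V} par ch lam beta (v : V -> Defs.C) x :
  Cim (Jac par ch lam beta v x) = JR par ch lam beta (fun z => Cim (v z)) x.
Proof.
  unfold Jac, JR. change (Cim (Cadd ?a ?b)) with (Cim a + Cim b).
  rewrite Cim_lsumC. unfold Cim, Cmul, Cadd, RtoC; simpl.
  rewrite (lsumR_ext _ _ (fun y => lam y * snd (v y))).
  2:{ intros; simpl; ring. } ring.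
Qed.

Lemma Cre_inner {V} par ch lam beta (S : list V) v :
  Cre (inner S (Jac par ch lam beta v) v) =
  lsumR S (fun z => JR par ch lam beta (fun z => Cre (v z)) z * Cre (v z)
                  + JR par ch lam beta (fun z => Cim (v z)) z * Cim (v z)).
Proof.
  unfold inner. rewrite Cre_lsumC. apply lsumR_ext; intros z _.
  rewrite <- Cre_Jac, <- Cim_Jac. unfold Cmul, Cconj, Cre, Cim; simpl. ring.
Qed.
Lemma Cim_inner {V} par ch lam beta (S : list V) v :
  Cim (inner S (Jac par ch lam beta v) v) =
  lsumR S (fun z => JR par ch lam beta (fun z => Cim (v z)) z * Cre (v z)
                  - JR par ch lam beta (fun z => Cre (v z)) z * Cim (v z)).
Proof.
  unfold inner. rewrite Cim_lsumC. apply lsumR_ext; intros z _.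
  rewrite <- Cre_Jac, <- Cim_Jac. unfold Cmul, Cconj, Cre, Cim; simpl. ring.
Qed.

Lemma B_expand {V} (par : V -> V) (ch : V -> list V) (lam beta : V -> R)
  (Hch : forall x y, In y (ch x) <-> par y = x) (HND : forall x, NoDup (ch x))
  (S : list V) (NS : NoDup S) (a b : V -> R)
  (Ha : forall z, ~ In z S -> a z = 0) (Hb : forall z, ~ In z S -> b z = 0) :
  lsumR S (fun z => JR par ch lam beta a z * b z) =
  lsumR S (fun z => lam z * a (par z) * b z) + lsumR S (fun z => beta z * a z * b z)
  + lsumR S (fun y => lam y * a y * b (par y)).
Proof.
  rewrite <- (reindex par ch Hch HND S NS (fun z y => lam y * a y * b z)).
  - rewrite <- !lsumR_plus. apply lsumR_ext; intros z _. unfold JR.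
    assert (E : lsumR (ch z) (fun y => lam y * a y * b z) = b z * lsumR (ch z) (fun y => lam y * a y)).
    { rewrite <- lsumR_scal; apply lsumR_ext; intros; ring. }
    rewrite E; ring.
  - intros y Hy. split.
    + destruct (EM (In (par y) S)) as [I|I]; auto. rewrite (Hb _ I) in Hy. lra.
    + destruct (EM (In y S)) as [I|I]; auto. rewrite (Ha _ I) in Hy. lra.
Qed.

Lemma Bsym {V} (par : V -> V) (ch : V -> list V) (lam beta : V -> R)
  (Hch : forall x y, In y (ch x) <-> par y = x) (HND : forall x, NoDup (ch x))
  (S : list V) (NS : NoDup S) (a b : V -> R)
  (Ha : forall z, ~ In z S -> a z = 0) (Hb : forall z, ~ In z S -> b z = 0) :
  lsumR S (fun z => JR par ch lam beta a z * b z) = lsumR S (fun z => JR par ch lam beta b z * a z).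
Proof.
  rewrite (B_expand par ch lam beta Hch HND S NS a b), (B_expand par ch lam beta Hch HND S NS b a); auto.
  rewrite (lsumR_ext S (fun z => beta z * b z * a z) (fun z => beta z * a z * b z)) by (intros; ring).
  rewrite (lsumR_ext S (fun z => lam z * b (par z) * a z) (fun y => lam y * a y * b (par y))) by (intros; ring).
  rewrite (lsumR_ext S (fun y => lam y * b y * a (par y)) (fun z => lam z * a (par z) * b z)) by (intros; ring).
  ring.
Qed.

Lemma Qpos {V} (par : V -> V) (ch : V -> list V) (lam beta : V -> R)
  (Hch : forall x y, In y (ch x) <-> par y = x) (HND : forall x, NoDup (ch x))
  (Hlam : forall x, 0 < lam x) (m : V -> R) (Hm : forall x, 0 < m x)
  (Hsup : forall x, beta x * m x >= lam x * m (par x) + lsumR (ch x) (fun y => lam y * m y))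
  (S : list V) (NS : NoDup S) (a : V -> R) (Ha : forall z, ~ In z S -> a z = 0) :
  0 <= lsumR S (fun z => JR par ch lam beta a z * a z).
Proof.
  rewrite (B_expand par ch lam beta Hch HND S NS a a); auto.
  assert (H1 : lsumR S (fun z => lam z * m (par z) * (a z * a z) / m z)
     + lsumR S (fun z => lsumR (ch z) (fun y => lam y * m y * (a z * a z) / m z))
     <= lsumR S (fun z => beta z * a z * a z)).
  { rewrite <- lsumR_plus. apply lsumR_le; intros z _.
    specialize (Hsup z). specialize (Hm z) as Hmz.
    rewrite (lsumR_ext (ch z) (fun y => lam y * m y * (a z * a z) / m z) (fun y => (a z * a z / m z) * (lam y * m y))) by (intros; field; lra).
    rewrite lsumR_scal.
    assert (0 <= a z * a z / m z) by (apply Rmult_le_pos; [nra| left; apply Rinv_0_lt_compat; auto]).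
    assert (E : beta z * a z * a z = (a z * a z / m z) * (beta z * m z)) by (field; lra).
    rewrite E. 
    assert (E2 : lam z * m (par z) * (a z * a z) / m z = (a z * a z / m z) * (lam z * m (par z))) by (field; lra).
    rewrite E2. rewrite <- Rmult_plus_distr_l. apply Rmult_le_compat_l; auto. lra. }
  assert (H2 : lsumR S (fun y => lam y * m y * (a (par y) * a (par y)) / m (par y))
     <= lsumR S (fun z => lsumR (ch z) (fun y => lam y * m y * (a z * a z) / m z))).
  { apply (reindex_le par ch Hch HND S NS (fun z y => lam y * m y * (a z * a z) / m z)).
    - intros z y. specialize (Hlam y). specialize (Hm y) as Hmy. specialize (Hm z) as Hmz.
      apply Rmult_le_pos; [|left; apply Rinv_0_lt_compat; auto].
      apply Rmult_le_pos; [|nra]. nra.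
    - intros y Hy. destruct (EM (In (par y) S)) as [I|I]; auto. rewrite (Ha _ I) in Hy. lra. }
  assert (H3 : 0 <= lsumR S (fun y => lam y * a y * a (par y) + lam y * a y * a (par y)
       + lam y * m (par y) * (a y * a y) / m y + lam y * m y * (a (par y) * a (par y)) / m (par y))).
  { apply Rle_trans with (lsumR S (fun _ : V => 0)); [rewrite lsumR_zero; auto; lra|].
    apply lsumR_le; intros y _.
    specialize (Hm y) as p. specialize (Hm (par y)) as q. specialize (Hlam y) as l.
    replace (lam y * a y * a (par y) + lam y * a y * a (par y) + lam y * m (par y) * (a y * a y) / m y +
      lam y * m y * (a (par y) * a (par y)) / m (par y)) with
      (lam y * ((m (par y) * a y + m y * a (par y)) * (m (par y) * a y + m y * a (par y))) / (m y * m (par y)))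
      by (field; lra).
    unfold Rdiv; apply Rmult_le_pos; [apply Rmult_le_pos; [lra|apply Rle_0_sqr]|left; apply Rinv_0_lt_compat; apply Rmult_lt_0_compat; auto]. }
  rewrite !lsumR_plus in H3.
  rewrite (lsumR_ext S (fun y => lam y * a y * a (par y)) (fun z => lam z * a (par z) * a z)) in H3 by (intros; ring).
  rewrite (lsumR_ext S (fun y => lam y * a y * a (par y)) (fun z => lam z * a (par z) * a z)) by (intros; ring).
  lra.
Qed.

Lemma part1 {V} (par : V -> V) (ch : V -> list V) (lam beta : V -> R)
  (Hch : forall x y, In y (ch x) <-> par y = x) (HND : forall x, NoDup (ch x))
  (Hlam : forall x, 0 < lam x) (m : V -> R) (Hm : forall x, 0 < m x)
  (Hsup : forall x, beta x * m x >= lam x * m (par x) + lsumR (ch x) (fun y => lam y * m y)) :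
  J_nonneg par ch lam beta.
Proof.
  intros v S NS Hv.
  assert (Ha : forall z, ~ In z S -> Cre (v z) = 0) by (intros z Hz; rewrite (Hv z Hz); reflexivity).
  assert (Hb : forall z, ~ In z S -> Cim (v z) = 0) by (intros z Hz; rewrite (Hv z Hz); reflexivity).
  split.
  - rewrite Cim_inner, lsumR_minus.
    rewrite (Bsym par ch lam beta Hch HND S NS (fun z => Cim (v z)) (fun z => Cre (v z))); auto. lra.
  - rewrite Cre_inner, lsumR_plus.
    pose proof (Qpos par ch lam beta Hch HND Hlam m Hm Hsup S NS _ Ha).
    pose proof (Qpos par ch lam beta Hch HND Hlam m Hm Hsup S NS _ Hb). lra.
Qed.
Fixpoint dfix {V} (ch : V -> list V) (lam beta : V -> R) (k : nat) (x : V) : R :=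
  match k with
  | O => beta x
  | S k' => beta x - lsumR (ch x) (fun y => lam y * (lam y / dfix ch lam beta k' y))
  end.
Definition dd {V} (lev : V -> nat) ch lam beta (x : V) : R := dfix ch lam beta (lev x) x.
Definition rr {V} (lev : V -> nat) ch (lam beta : V -> R) (x : V) : R := lam x / dd lev ch lam beta x.

Fixpoint prodN {V} (par : V -> V) (r : V -> R) (n : nat) (z : V) : R :=
  match n with O => 1 | S n' => - r z * prodN par r n' (par z) end.
Fixpoint prodP {V} (par : V -> V) (r : V -> R) (n : nat) (z : V) : R :=
  match n with O => 1 | S n' => r z * prodP par r n' (par z) end.
Fixpoint descl {V} (ch : V -> list V) (k : nat) (x : V) : list V :=
  match k with O => [x] | S k' => x :: flat_map (descl ch k') (ch x) end.

Lemma lev_iter {V} (par : V -> V) lev (Hlev : forall x, lev (par x) = S (lev x)) n z :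
  lev (Nat.iter n par z) = (n + lev z)%nat.
Proof. induction n; simpl; auto. rewrite Hlev, IHn. reflexivity. Qed.

Lemma d_eq {V} (par : V -> V) lev ch lam beta (Hlev : forall x, lev (par x) = S (lev x))
  (Hch : forall x y, In y (ch x) <-> par y = x) (Hleaf : forall x, lev x = 0%nat -> ch x = []) x :
  dd lev ch lam beta x = beta x - lsumR (ch x) (fun y => lam y * rr lev ch lam beta y).
Proof.
  unfold dd. destruct (lev x) eqn:E.
  - rewrite Hleaf by auto. simpl. unfold lsumR; simpl. lra.
  - simpl. f_equal. apply lsumR_ext; intros y Hy. apply Hch in Hy.
    unfold rr, dd. assert (lev y = n) by (subst x; rewrite Hlev in E; lia). rewrite H. reflexivity.
Qed.

Lemma descl_spec {V} (par : V -> V) lev ch (Hlev : forall x, lev (par x) = S (lev x))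
  (Hch : forall x y, In y (ch x) <-> par y = x) n z x :
  Nat.iter n par z = x -> In z (descl ch (lev x) x).
Proof.
  revert x; induction n; intros x H.
  - simpl in H; subst. destruct (lev x); simpl; auto.
  - simpl in H. set (y := Nat.iter n par z) in *.
    assert (E : lev x = S (lev y)) by (subst x; apply Hlev). rewrite E. simpl. right.
    apply in_flat_map. exists y. split. apply Hch; auto. apply IHn; reflexivity.
Qed.

Lemma prodP_add {V} (par : V -> V) r n j x :
  prodP par r (n + j) x = prodP par r n x * prodP par r j (Nat.iter n par x).
Proof.
  revert x; induction n; intros x; simpl. lra.
  rewrite IHn, <- Nat.iter_swap. ring.
Qed.

Lemma prodP_pos {V} (par : V -> V) r (Hr : forall x, 0 < r x) n x : 0 < prodP par r n x.
Proof. revert x; induction n; intros x; simpl. lra. apply Rmult_lt_0_compat; auto. Qed.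
Definition eqdec {V : Type} : forall a b : V, {a = b} + {a <> b} := fun a b => EM (a = b).

Lemma step {V} (par : V -> V) (lev : V -> nat) (ch : V -> list V) (lam beta : V -> R)
  (Hlev : forall x, lev (par x) = S (lev x)) (HND : forall x, NoDup (ch x))
  (Hch : forall x y, In y (ch x) <-> par y = x) (Hleaf : forall x, lev x = 0%nat -> ch x = [])
  (Hlam : forall x, 0 < lam x) (HJ : J_nonneg par ch lam beta) (x : V)
  (IH : forall y, (lev y < lev x)%nat -> 0 < dd lev ch lam beta y) :
  0 < dd lev ch lam beta x.
Proof.
  set (d := dd lev ch lam beta). set (r := rr lev ch lam beta).
  assert (Hd : forall z, d z = beta z - lsumR (ch z) (fun y => lam y * r y))
    by (intros; apply (d_eq par); auto).
  set (inT := fun z => exists n, Nat.iter n par z = x).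
  set (w := fun z => prodN par r (lev x - lev z) z).
  set (eps := lam x / (Rabs (beta (par x)) + 1)).
  set (a := fun z => if EM (inT z) then w z else if EM (z = par x) then - eps else 0).
  assert (inT_le : forall z, inT z -> (lev z <= lev x)%nat).
  { intros z [n Hn]. rewrite <- Hn, (lev_iter par lev Hlev). lia. }
  assert (inT_eq : forall z, inT z -> lev z = lev x -> z = x).
  { intros z [n Hn] E. pose proof (lev_iter par lev Hlev n z) as L. rewrite Hn in L.
    assert (n = 0%nat) by lia. subst n. exact Hn. }
  assert (inT_x : inT x) by (exists 0%nat; reflexivity).
  assert (inT_up : forall y, inT (par y) -> inT y).
  { intros y [n Hn]. exists (S n). rewrite Nat.iter_succ_r. auto. }
  assert (inT_par : forall z, inT z -> z <> x -> inT (par z)).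
  { intros z [n Hn] Hz. destruct n as [|n]. simpl in Hn; congruence.
    exists n. rewrite <- Nat.iter_succ_r. auto. }
  assert (wrec : forall y, inT (par y) -> w y = - r y * w (par y)).
  { intros y Hy. pose proof (inT_le _ Hy) as L. rewrite Hlev in L. unfold w.
    replace (lev x - lev y)%nat with (S (lev x - lev (par y))) by (rewrite Hlev; lia).
    reflexivity. }
  assert (a_in : forall z, inT z -> a z = w z).
  { intros z Hz; unfold a; destruct (EM (inT z)); tauto. }
  assert (npx : ~ inT (par x)) by (intros H; apply inT_le in H; rewrite Hlev in H; lia).
  assert (a_px : a (par x) = - eps).
  { unfold a; destruct (EM (inT (par x))); [tauto|]. destruct (EM (par x = par x)); tauto. }
  assert (a_out : forall z, ~ inT z -> z <> par x -> a z = 0).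
  { intros z H1 H2; unfold a; destruct (EM (inT z)); [tauto|]. destruct (EM (z = par x)); tauto. }
  assert (w_x : w x = 1) by (unfold w; rewrite Nat.sub_diag; reflexivity).
  assert (JR0 : forall z, inT z -> z <> x -> JR par ch lam beta a z = 0).
  { intros z Hz Hzx. unfold JR.
    pose proof (inT_par z Hz Hzx) as Hpz.
    assert (Ll : (lev z < lev x)%nat).
    { apply inT_le in Hpz. rewrite Hlev in Hpz. lia. }
    pose proof (IH z Ll) as dpos. fold d in dpos.
    rewrite (a_in _ Hpz), (a_in _ Hz), (wrec z Hpz).
    rewrite (lsumR_ext (ch z) (fun y => lam y * a y) (fun y => (r z * w (par z)) * (lam y * r y))).
    2:{ intros y Hy. apply Hch in Hy. assert (inT (par y)) by (rewrite Hy; auto).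
        rewrite (a_in y (inT_up y H)), (wrec y H), Hy, (wrec z Hpz). ring. }
    rewrite lsumR_scal.
    assert (E : lsumR (ch z) (fun y => lam y * r y) = beta z - d z) by (rewrite Hd; ring).
    rewrite E. unfold r, rr. fold d. field. lra. }
  destruct (Rlt_or_le 0 (d x)) as [P|P]; [exact P|]. exfalso.
  set (S := nodup eqdec (par x :: descl ch (lev x) x)).
  assert (NS : NoDup S) by apply NoDup_nodup.
  assert (inS : forall z, inT z \/ z = par x -> In z S).
  { intros z Hz. apply nodup_In. destruct Hz as [[n Hn]|Hz]; [right|left; auto].
    eapply descl_spec; eauto. }
  assert (supp : forall z, ~ In z S -> (fun z => RtoC (a z)) z = C0).
  { intros z Hz. unfold RtoC, C0. rewrite a_out; [reflexivity| |];
    intros H; apply Hz, inS; auto. }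
  destruct (HJ (fun z => RtoC (a z)) S NS supp) as [_ Hre].
  rewrite Cre_inner in Hre.
  change (fun z => Cre (RtoC (a z))) with a in Hre.
  change (fun z => Cim (RtoC (a z))) with (fun _ : V => 0) in Hre.
  rewrite (lsumR_ext S _ (fun z => JR par ch lam beta a z * a z)) in Hre.
  2:{ intros; unfold Cim, RtoC; simpl. ring. }
  assert (xpx : x <> par x) by (intros E; pose proof (Hlev x) as L; rewrite <- E in L; lia).
  rewrite (lsumR_two S x (par x)) in Hre; auto.
  2:{ intros z _ H1 H2. destruct (EM (inT z)) as [I|I].
      - rewrite JR0; auto; ring.
      - rewrite a_out; auto; ring. }
  assert (Jx : JR par ch lam beta a x = d x - lam x * eps).
  { unfold JR. rewrite a_px, (a_in x inT_x), w_x.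
    rewrite (lsumR_ext (ch x) (fun y => lam y * a y) (fun y => -1 * (lam y * r y))).
    2:{ intros y Hy. apply Hch in Hy. assert (inT (par y)) by (rewrite Hy; auto).
        rewrite (a_in y (inT_up y H)), (wrec y H), Hy, w_x. ring. }
    rewrite lsumR_scal, Hd. ring. }
  assert (Jpx : JR par ch lam beta a (par x) = - beta (par x) * eps + lam x).
  { unfold JR. rewrite a_px.
    rewrite a_out.
    2:{ intros H; apply inT_le in H; rewrite !Hlev in H; lia. }
    2:{ intros E; pose proof (Hlev (par x)) as L; rewrite E in L; lia. }
    rewrite (lsumR_single (ch (par x)) x); auto.
    - rewrite (a_in x inT_x), w_x. ring.
    - apply Hch; auto.
    - intros y Hy Hyx. apply Hch in Hy. rewrite a_out. ring.
      + intros H. apply Hyx, inT_eq; auto. pose proof (Hlev y) as L1. pose proof (Hlev x) as L2.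
        rewrite Hy in L1. lia.
      + intros E. pose proof (Hlev y) as L1. rewrite Hy, E in L1. rewrite Hlev in L1. lia. }
  rewrite Jx, Jpx, a_px, (a_in x inT_x), w_x in Hre.
  set (b := beta (par x)) in *.
  assert (le : 0 < lam x) by auto.
  assert (ep : eps * (Rabs b + 1) = lam x) by (unfold eps; field; pose proof (Rabs_pos b); lra).
  assert (epos : 0 < eps) by (unfold eps; apply Rdiv_lt_0_compat; auto; pose proof (Rabs_pos b); lra).
  assert (bb : b * eps * eps <= Rabs b * eps * eps).
  { apply Rmult_le_compat_r; [lra|]. apply Rmult_le_compat_r; [lra|]. apply Rle_abs. }
  nra.
Qed.
Theorem theorem7 (V : Type) (par : V -> V) (lev : V -> nat) (ch : V -> list V)
  (lam beta : V -> R)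
  (Htree : level_tree par lev ch)
  (Hlam : forall x, 0 < lam x) :
  ((exists m : V -> R, (forall x, 0 < m x) /\
      (forall x, beta x * m x >= lam x * m (par x) + lsumR (ch x) (fun y => lam y * m y))) ->
   J_nonneg par ch lam beta) /\
  (J_nonneg par ch lam beta ->
   exists m : V -> R, (forall x, 0 < m x) /\
      (forall x, beta x * m x = lam x * m (par x) + lsumR (ch x) (fun y => lam y * m y))).
Proof.
  destruct Htree as [Hinh [Hlev [HND [Hch [Hne [Hleaf Hconn]]]]]].
  split.
  { intros [m [Hm Hsup]]. eapply part1; eauto. }
  intros HJ.
  set (d := dd lev ch lam beta). set (r := rr lev ch lam beta).
  assert (dpos : forall x, 0 < d x).
  { assert (forall k x, (lev x <= k)%nat -> 0 < d x).
    { induction k; intros x Hx; apply (step par lev ch lam beta); auto;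
        intros y Hy; [lia|]. apply IHk. lia. }
    intros x; apply (H (lev x)); auto. }
  assert (rpos : forall x, 0 < r x) by (intros; unfold r, rr; apply Rdiv_lt_0_compat; auto; apply dpos).
  destruct Hinh as [o].
  assert (choose : forall x, {p : nat * nat | Nat.iter (fst p) par x = Nat.iter (snd p) par o}).
  { intros x. apply constructive_indefinite_description.
    destruct (Hconn x o) as [n [k H]]. exists (n, k). auto. }
  set (m := fun x => prodP par r (fst (proj1_sig (choose x))) x / prodP par r (snd (proj1_sig (choose x))) o).
  assert (indep : forall x n k n' k', Nat.iter n par x = Nat.iter k par o ->
     Nat.iter n' par x = Nat.iter k' par o ->
     prodP par r n x / prodP par r k o = prodP par r n' x / prodP par r k' o).
  { assert (W : forall x n k n' k', Nat.iter n par x = Nat.iter k par o ->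
     Nat.iter n' par x = Nat.iter k' par o -> (n <= n')%nat ->
     prodP par r n x / prodP par r k o = prodP par r n' x / prodP par r k' o).
    { intros x n k n' k' H1 H2 Hle.
      pose proof (f_equal lev H1) as L1. pose proof (f_equal lev H2) as L2.
      rewrite !(lev_iter par lev Hlev) in L1, L2.
      replace n' with (n + (n' - n))%nat by lia. replace k' with (k + (n' - n))%nat by lia.
      rewrite !prodP_add, H1.
      pose proof (prodP_pos par r rpos n x). pose proof (prodP_pos par r rpos k o).
      pose proof (prodP_pos par r rpos (n' - n) (Nat.iter k par o)).
      field. split; lra. }
    intros. destruct (Nat.le_ge_cases n n'); [eapply W; eauto|symmetry; eapply W; eauto]. }
  assert (mrec : forall x, m x = r x * m (par x)).
  { intros x. unfold m.
    destruct (choose x) as [[n k] Hp]. destruct (choose (par x)) as [[n2 k2] Hp2]. simpl in *.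
    rewrite (indep x n k (S n2) k2); auto.
    2:{ rewrite Nat.iter_succ_r. auto. }
    simpl. unfold Rdiv. ring. }
  assert (mpos : forall x, 0 < m x).
  { intros x; unfold m. apply Rdiv_lt_0_compat; apply prodP_pos; auto. }
  exists m. split; auto.
  intros x.
  rewrite (lsumR_ext (ch x) (fun y => lam y * m y) (fun y => m x * (lam y * r y))).
  2:{ intros y Hy. apply Hch in Hy. rewrite (mrec y), Hy. ring. }
  rewrite lsumR_scal.
  assert (E : lsumR (ch x) (fun y => lam y * r y) = beta x - d x) by (unfold r, d; rewrite (d_eq par lev ch lam beta Hlev Hch Hleaf x); ring).
  rewrite E. rewrite (mrec x). unfold r at 1, rr. fold d.
  unfold r, rr. fold d. pose proof (dpos x). field. lra.
Qed.
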